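(* Let $T,C_1>0$ and let $\mu\in C([0,T],(0,\infty))$ satisfy $\Phi_h(\mu)\neq 0$. Then the Gâteaux derivatives below exist, and the following two statements are equivalent: (a) $\mathcal{G}(\mu)=C_1$ and there exists $\lambda\in\mathbb{R}$ such that for every $\delta\mu\in C([0,T],\mathbb{R})$, $\frac{\mathrm{d}}{\mathrm{d}\varepsilon}\Big|_{\varepsilon=0}\Big[\Phi(z_{\mu+\varepsilon\delta\mu}(T))+\lambda\,\mathcal{G}(\mu+\varepsilon\delta\mu)\Big]=0$ (the first-order necessary conditions for a stationary point of $\mu\mapsto\Phi(z_\mu(T))$ subject to $\mathcal{G}(\mu)=C_1$); (b) $\mathcal{G}(\mu)=C_1$ and there exists $\lambda_{\mathrm{ref}}\in\mathbb{R}$ such that for every $\delta\mu\in C([0,T],\mathbb{R})$, $\frac{\mathrm{d}}{\mathrm{d}\varepsilon}\Big|_{\varepsilon=0}\Big[\mathcal{I}(\mu+\varepsilon\delta\mu)+\lambda_{\mathrm{ref}}\,\mathcal{G}(\mu+\varepsilon\delta\mu)\Big]=0$ (the first-order necessary conditions for a stationary point of $\mathcal{I}$ subject to $\mathcal{G}(\mu)=C_1$). Moreover, the multipliers correspond via $\lambda_{\mathrm{ref}}=\lambda/\Phi_h(\mu)$.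
   Context: Standing setup: $n,s\ge1$, $p\in\mathbb{R}^s$, $z_0\in\mathbb{R}^n$; $h:\mathbb{R}^n\times\mathbb{R}^s\to\mathbb{R}^n$ is continuously differentiable in its first argument and such that the autonomous initial value problem $\hat z'(\tau)=h(\hat z(\tau),p)$, $\hat z(0)=z_0$ has a unique solution $\hat z$ defined for all $\tau\in\mathbb{R}$. For $T>0$ and $\mu\in C([0,T],\mathbb{R})$, $z_\mu:[0,T]\to\mathbb{R}^n$ denotes the solution of $\dot z(t)=\mu(t)h(z(t),p)$, $z(0)=z_0$. $\Phi:\mathbb{R}^n\to\mathbb{R}$ is continuously differentiable, and $g:\mathbb{R}\to\mathbb{R}$ is continuously differentiable and positive. Define $\mathcal{G}(\mu):=\int_0^T g(\mu(t))\,\mathrm{d}t$, $\mathcal{I}(\mu):=\int_0^T\mu(t)\,\mathrm{d}t$, and $\Phi_h(\mu):=\nabla\Phi(z_\mu(T))\cdot h(z_\mu(T),p)$ (the Lie derivative of $\Phi$ along $h$ at the terminal state). *)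

(* Defs.v *)
From mathcomp Require Import ssreflect ssrfun ssrbool eqtype ssrnat seq fintype bigop.
From Stdlib Require Import Reals ClassicalEpsilon.
Open Scope R_scope.

Definition vec (n : nat) := 'I_n -> R.

Definition fsum (n : nat) (f : 'I_n -> R) : R := \big[Rplus/0]_(i < n) f i.

(* l^1 norm on R^n (all norms are equivalent; any choice is fine). *)
Definition vnorm {n : nat} (x : vec n) : R := fsum n (fun i => Rabs (x i)).

Definition vsub {n : nat} (x y : vec n) : vec n := fun i => x i - y i.

Definition dot {n : nat} (x y : vec n) : R := fsum n (fun i => x i * y i).

Definition vcont {n : nat} (F : vec n -> R) (x : vec n) : Prop :=
  forall eps, 0 < eps -> exists delta, 0 < delta /\
    forall y, vnorm (vsub y x) < delta -> Rabs (F y - F x) < eps.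

Definition frechet_grad {n : nat} (F : vec n -> R) (x gr : vec n) : Prop :=
  forall eps, 0 < eps -> exists delta, 0 < delta /\
    forall y, vnorm (vsub y x) < delta ->
      Rabs (F y - F x - dot gr (vsub y x)) <= eps * vnorm (vsub y x).

Definition C1_scalar {n : nat} (F : vec n -> R) (DF : vec n -> vec n) : Prop :=
  (forall x, frechet_grad F x (DF x)) /\
  (forall x j, vcont (fun y => DF y j) x).

(* H : R^n -> R^n is continuously differentiable (Jacobian J x i j = dH_i/dx_j):
   Fréchet differentiable at every point with Jacobian J, and J continuous. *)
Definition C1_vector {n : nat} (H : vec n -> vec n) : Prop :=
  exists J : vec n -> 'I_n -> vec n,
    (forall x, forall eps, 0 < eps -> exists delta, 0 < delta /\
      forall y, vnorm (vsub y x) < delta ->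
        vnorm (fun i => H y i - H x i - dot (J x i) (vsub y x))
          <= eps * vnorm (vsub y x)) /\
    (forall x i j, vcont (fun y => J y i j) x).

Definition C1_real (g : R -> R) : Prop :=
  exists g' : R -> R, (forall t, derivable_pt_lim g t (g' t)) /\ continuity g'.

Definition cont_on (a b : R) (f : R -> R) : Prop :=
  forall t, a <= t <= b -> forall eps, 0 < eps -> exists delta, 0 < delta /\
    forall u, a <= u <= b -> Rabs (u - t) < delta -> Rabs (f u - f t) < eps.

(* Riemann integral of f over [a,b] (the value of RiemannInt, for any proof of
   integrability; continuous functions on [a,b] are integrable). *)
Definition Int (f : R -> R) (a b : R) : R :=
  epsilon (inhabits 0) (fun v => exists pr : Riemann_integrable f a b, RiemannInt pr = v).

Definition is_sol {n s : nat} (h : vec n -> vec s -> vec n) (p : vec s) (z0 : vec n)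
    (T : R) (mu : R -> R) (z : R -> vec n) : Prop :=
  z 0 = z0 /\
  (forall i, cont_on 0 T (fun t => z t i)) /\
  (forall t i, 0 < t < T -> derivable_pt_lim (fun u => z u i) t (mu t * h (z t) p i)).

Definition auto_sol {n s : nat} (h : vec n -> vec s -> vec n) (p : vec s) (z0 : vec n)
    (zh : R -> vec n) : Prop :=
  zh 0 = z0 /\ forall tau i, derivable_pt_lim (fun u => zh u i) tau (h (zh tau) p i).

Definition Gfun (g : R -> R) (T : R) (mu : R -> R) : R := Int (fun t => g (mu t)) 0 T.
Definition Ifun (T : R) (mu : R -> R) : R := Int mu 0 T.

Definition Phi_h {n s : nat} (DPhi : vec n -> vec n) (h : vec n -> vec s -> vec n)
    (p : vec s) (zT : vec n) : R := dot (DPhi zT) (h zT p).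

Definition pert (mu dmu : R -> R) (eps : R) : R -> R := fun t => mu t + eps * dmu t.

(* Main.v *)
Require Import Defs.
From mathcomp Require Import ssreflect ssrfun ssrbool eqtype ssrnat seq fintype bigop.
From Stdlib Require Import Reals Lra FunctionalExtensionality.
Open Scope R_scope.

Lemma fsum_seq n (f : 'I_n -> R) : fsum n f = \big[Rplus/0]_(i <- index_enum 'I_n) f i.
Proof. reflexivity. Qed.

Section S.
Variable T : eqType.
Implicit Types (r : seq T) (F G : T -> R).

Lemma sR_ext r F G : (forall i, F i = G i) -> \big[Rplus/0]_(i <- r) F i = \big[Rplus/0]_(i <- r) G i.
Proof. move=> H; elim: r => [|x r IH]; rewrite ?big_nil // !big_cons H IH //. Qed.
Lemma sR_plus r F G : \big[Rplus/0]_(i <- r) (F i + G i) = \big[Rplus/0]_(i <- r) F i + \big[Rplus/0]_(i <- r) G i.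
Proof. elim: r => [|x r IH]; rewrite ?big_nil ?big_cons; [lra| rewrite IH; lra]. Qed.
Lemma sR_scal r c F : \big[Rplus/0]_(i <- r) (c * F i) = c * \big[Rplus/0]_(i <- r) F i.
Proof. elim: r => [|x r IH]; rewrite ?big_nil ?big_cons; [lra| rewrite IH; lra]. Qed.
Lemma sR_le r F G : (forall i, F i <= G i) -> \big[Rplus/0]_(i <- r) F i <= \big[Rplus/0]_(i <- r) G i.
Proof. move=> H; elim: r => [|x r IH]; rewrite ?big_nil ?big_cons; [lra| have := H x; lra]. Qed.
Lemma sR_abs r F : Rabs (\big[Rplus/0]_(i <- r) F i) <= \big[Rplus/0]_(i <- r) Rabs (F i).
Proof. elim: r => [|x r IH]; rewrite ?big_nil ?big_cons; first by rewrite Rabs_R0; lra.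
  have := Rabs_triang (F x) (\big[Rplus/0]_(i <- r) F i); lra. Qed.
Lemma sR_ge0 r F : (forall i, 0 <= F i) -> 0 <= \big[Rplus/0]_(i <- r) F i.
Proof. move=> H; elim: r => [|x r IH]; rewrite ?big_nil ?big_cons; [lra| have := H x; lra]. Qed.
Lemma sR_term r F i : (forall j, 0 <= F j) -> i \in r -> F i <= \big[Rplus/0]_(j <- r) F j.
Proof. move=> H; elim: r => [|x r IH] //; rewrite in_cons big_cons => /orP [/eqP ->|Hi].
  - have := sR_ge0 r F H; lra.
  - have := IH Hi; have := H x; lra. Qed.
Lemma sR_derive r (F : T -> R -> R) (dF : T -> R) s :
  (forall i, derivable_pt_lim (F i) s (dF i)) ->
  derivable_pt_lim (fun t => \big[Rplus/0]_(i <- r) F i t) s (\big[Rplus/0]_(i <- r) dF i).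
Proof. move=> H; elim: r => [|x r IH].
  - have -> : (fun t => \big[Rplus/0]_(i <- [::]) F i t) = fun _ => 0.
      by apply functional_extensionality => t; rewrite big_nil.
    rewrite big_nil; apply derivable_pt_lim_const.
  - have -> : (fun t => \big[Rplus/0]_(i <- x :: r) F i t) = fun t => F x t + \big[Rplus/0]_(i <- r) F i t.
      by apply functional_extensionality => t; rewrite big_cons.
    rewrite big_cons; apply derivable_pt_lim_plus => //. Qed.
Lemma fin_delta r (P : T -> R -> Prop) :
  (forall i d d', 0 < d' <= d -> P i d -> P i d') ->
  (forall i, exists d, 0 < d /\ P i d) -> exists d, 0 < d /\ forall i, i \in r -> P i d.
Proof. move=> Hm H; elim: r => [|x r [d [Hd IH]]]; first by exists 1; split => //; lra.
  have [dx [Hdx Px]] := H x.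
  exists (Rmin dx d); split; first by apply Rmin_glb_lt.
  move=> i; rewrite in_cons => /orP [/eqP ->|Hi].
  - apply: (Hm x dx) => //; split; [apply Rmin_glb_lt => // | apply Rmin_l].
  - apply: (Hm i d) => //; [split; [apply Rmin_glb_lt => // | apply Rmin_r] | by apply IH]. Qed.
End S.

Lemma sR_const (T : eqType) (r : seq T) c : \big[Rplus/0]_(i <- r) c = INR (size r) * c.
Proof. elim: r => [|x r IH]; first by rewrite big_nil /=; lra.
  rewrite big_cons IH; change (size (x :: r)) with (S (size r)); rewrite (S_INR (size r)); lra. Qed.
Lemma fsum_const n c : fsum n (fun _ => c) = INR n * c.
Proof. rewrite fsum_seq sR_const; congr (INR _ * _); rewrite /index_enum; unlock; rewrite -enumT size_enum_ord //. Qed.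

Section FS.
Variable n : nat.
Implicit Types (f g : 'I_n -> R).
Lemma fsum_ext f g : (forall i, f i = g i) -> fsum n f = fsum n g.
Proof. move=> H; rewrite !fsum_seq; exact: sR_ext. Qed.
Lemma fsum_plus f g : fsum n (fun i => f i + g i) = fsum n f + fsum n g.
Proof. rewrite !fsum_seq; exact: sR_plus. Qed.
Lemma fsum_scal c f : fsum n (fun i => c * f i) = c * fsum n f.
Proof. rewrite !fsum_seq; exact: sR_scal. Qed.
Lemma fsum_le f g : (forall i, f i <= g i) -> fsum n f <= fsum n g.
Proof. move=> H; rewrite !fsum_seq; exact: sR_le. Qed.
Lemma fsum_abs f : Rabs (fsum n f) <= fsum n (fun i => Rabs (f i)).
Proof. rewrite !fsum_seq; exact: sR_abs. Qed.
Lemma fsum_ge0 f : (forall i, 0 <= f i) -> 0 <= fsum n f.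
Proof. move=> H; rewrite !fsum_seq; exact: sR_ge0. Qed.
Lemma fsum_term f i : (forall j, 0 <= f j) -> f i <= fsum n f.
Proof. move=> H; rewrite !fsum_seq; apply: sR_term => //; exact: mem_index_enum. Qed.
Lemma fsum_derive (F : 'I_n -> R -> R) (dF : 'I_n -> R) s :
  (forall i, derivable_pt_lim (F i) s (dF i)) ->
  derivable_pt_lim (fun t => fsum n (fun i => F i t)) s (fsum n dF).
Proof. move=> H; rewrite fsum_seq.
  have -> : (fun t => fsum n (fun i => F i t)) = (fun t => \big[Rplus/0]_(i <- index_enum 'I_n) F i t) by [].
  exact: sR_derive. Qed.
Lemma fin_delta_ord (P : 'I_n -> R -> Prop) :
  (forall i d d', 0 < d' <= d -> P i d -> P i d') ->
  (forall i, exists d, 0 < d /\ P i d) -> exists d, 0 < d /\ forall i, P i d.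
Proof. move=> Hm H; have [d [Hd Hr]] := @fin_delta _ (index_enum 'I_n) P Hm H.
  exists d; split => // i; apply Hr; exact: mem_index_enum. Qed.
End FS.

Lemma vnorm_ge0 n (x : vec n) : 0 <= vnorm x.
Proof. apply fsum_ge0 => i; apply Rabs_pos. Qed.
Lemma vnorm_comp n (x : vec n) i : Rabs (x i) <= vnorm x.
Proof. rewrite /vnorm; apply: (@fsum_term n (fun j => Rabs (x j)) i) => j; apply Rabs_pos. Qed.
Lemma vnorm_triang n (a b c : vec n) : vnorm (vsub a b) <= vnorm (vsub a c) + vnorm (vsub b c).
Proof. rewrite /vnorm -fsum_plus; apply fsum_le => i; rewrite /vsub.
  have := Rabs_triang (a i - c i) (- (b i - c i)); rewrite Rabs_Ropp.
  have -> : a i - c i + - (b i - c i) = a i - b i by ring. lra. Qed.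
Lemma dot_bound n (u v : vec n) B : (forall j, Rabs (u j) <= B) -> Rabs (dot u v) <= B * vnorm v.
Proof. move=> H; apply: Rle_trans; first exact: fsum_abs.
  rewrite /vnorm -fsum_scal; apply fsum_le => j; rewrite Rabs_mult.
  apply Rmult_le_compat_r; [apply Rabs_pos | apply H]. Qed.

Arguments vnorm_ge0 {n}. Arguments vnorm_comp {n}. Arguments vnorm_triang {n}. Arguments dot_bound {n}.

Lemma div_bound x hh c eps : hh <> 0 -> Rabs x <= c * Rabs hh -> c < eps -> Rabs (x / hh) < eps.
Proof. move=> Hh Hx Hc. have Ha : 0 < Rabs hh by apply Rabs_pos_lt.
  rewrite /Rdiv Rabs_mult Rabs_inv. apply (Rmult_lt_reg_r (Rabs hh)) => //.
  rewrite Rmult_assoc Rinv_l; [|lra]. nra. Qed.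

Definition clampT (T t : R) := Rmax 0 (Rmin t T).
Lemma clamp_id T t : 0 <= t <= T -> clampT T t = t.
Proof. move=> H; rewrite /clampT /Rmax /Rmin; repeat destruct Rle_dec; lra. Qed.
Lemma clamp_in T t : 0 <= T -> 0 <= clampT T t <= T.
Proof. move=> H; rewrite /clampT /Rmax /Rmin; repeat destruct Rle_dec; lra. Qed.
Lemma clamp_lip T u x : 0 <= T -> Rabs (clampT T u - clampT T x) <= Rabs (u - x).
Proof. move=> H; rewrite /clampT /Rmax /Rmin; repeat destruct Rle_dec; split_Rabs; lra. Qed.

Lemma cont_clamp T f : 0 <= T -> cont_on 0 T f -> forall x, continuity_pt (fun t => f (clampT T t)) x.
Proof. move=> HT Hf x eps Heps.
  have [d [Hd Hd2]] := Hf (clampT T x) (@clamp_in T x HT) eps Heps.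
  exists d; split => // y [_ Hy]; simpl in *; rewrite /R_dist in Hy *.
  apply Hd2; first exact: clamp_in.
  have := @clamp_lip T y x HT; lra. Qed.

Lemma deriv_clamp T f t l : 0 < t < T -> derivable_pt_lim f t l -> derivable_pt_lim (fun u => f (clampT T u)) t l.
Proof. move=> Ht Hf eps Heps. have [d Hd] := Hf eps Heps.
  have Hp : 0 < Rmin d (Rmin t (T - t)) by apply Rmin_glb_lt; [apply cond_pos| apply Rmin_glb_lt; lra].
  exists (mkposreal _ Hp) => hh Hh Hhh; simpl in Hhh.
  have H1 := Rmin_l d (Rmin t (T - t)); have H2 := Rmin_r d (Rmin t (T - t)).
  have H3 := Rmin_l t (T - t); have H4 := Rmin_r t (T - t).
  rewrite clamp_id; [|split_Rabs; lra]. rewrite clamp_id; [|lra].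
  apply Hd => //; lra. Qed.

Lemma cont_on_ext T f g : (forall t, 0 <= t <= T -> f t = g t) -> cont_on 0 T f -> cont_on 0 T g.
Proof. move=> He Hf t Ht eps Heps; have [d [Hd H]] := Hf t Ht eps Heps.
  exists d; split => // u Hu Hut; rewrite -!He //; exact: H. Qed.

Lemma cont_on_of T f : (forall x, continuity_pt f x) -> cont_on 0 T f.
Proof. move=> Hf t Ht eps Heps; have [d [Hd H]] := Hf t eps Heps.
  exists d; split => // u Hu Hut.
  case: (Req_dec u t) => [->|Hne]; first by rewrite Rminus_diag Rabs_R0.
  apply: (H u); split => //; split => //; congruence. Qed.

Definition seg {n} (a b : vec n) (s : R) : vec n := fun j => a j + s * (b j - a j).

Lemma lip_local n (H : vec n -> vec n) : C1_vector H -> forall w0 : vec n,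
  exists r, 0 < r /\ exists L, 0 <= L /\ forall a b, vnorm (vsub a w0) < r -> vnorm (vsub b w0) < r ->
    forall i, Rabs (H b i - H a i) <= L * vnorm (vsub b a).
Proof.
  move=> [J [HF HJ]] w0.
  have [r [Hr Hb]] : exists r, 0 < r /\ forall i j y, vnorm (vsub y w0) < r -> Rabs (J y i j - J w0 i j) < 1.
  { apply: (@fin_delta_ord n (fun i d => forall j y, vnorm (vsub y w0) < d -> Rabs (J y i j - J w0 i j) < 1)).
    - move=> i d d' Hd Hp j y Hy; apply Hp; lra.
    - move=> i; apply: (@fin_delta_ord n (fun j d => forall y, vnorm (vsub y w0) < d -> Rabs (J y i j - J w0 i j) < 1)).
      + move=> j d d' Hd Hp y Hy; apply Hp; lra.
      + move=> j; have [d [Hd Hd2]] := HJ w0 i j 1 Rlt_0_1; exists d; split => //. }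
  set L := fsum n (fun i => fsum n (fun j => Rabs (J w0 i j) + 1)).
  have HL : forall i j y, vnorm (vsub y w0) < r -> Rabs (J y i j) <= L.
  { move=> i j y Hy; have := Hb i j y Hy => Hij.
    have Ht : Rabs (J y i j) <= Rabs (J w0 i j) + 1.
    { have := Rabs_triang_inv (J y i j) (J w0 i j); lra. }
    apply: (Rle_trans _ _ _ Ht); rewrite /L.
    apply: Rle_trans; last apply: (@fsum_term n (fun i => fsum n (fun j => Rabs (J w0 i j) + 1)) i).
    - apply: (@fsum_term n (fun j => Rabs (J w0 i j) + 1) j) => k; have := Rabs_pos (J w0 i k); lra.
    - move=> k; apply fsum_ge0 => l; have := Rabs_pos (J w0 k l); lra. }
  exists r; split => //; exists L; split.
  { apply fsum_ge0 => i; apply fsum_ge0 => j; have := Rabs_pos (J w0 i j); lra. }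
  move=> a b Ha Hb' i.
  set N := vnorm (vsub b a).
  have HN : 0 <= N by apply vnorm_ge0.
  have Hder : forall s, derivable_pt_lim (fun s => H (seg a b s) i) s (dot (J (seg a b s) i) (vsub b a)).
  { move=> s eps Heps.
    have He' : 0 < eps / 2 / (N + 1) by apply Rdiv_lt_0_compat; lra.
    have [d [Hd Hd2]] := HF (seg a b s) _ He'.
    have Hp : 0 < d / (N + 1) by apply Rdiv_lt_0_compat; lra.
    exists (mkposreal _ Hp) => hh Hh Hhh; simpl in Hhh.
    have Hv : vnorm (vsub (seg a b (s + hh)) (seg a b s)) = Rabs hh * N.
    { rewrite /vnorm /N -fsum_scal; apply fsum_ext => j; rewrite /vsub /seg -Rabs_mult; congr Rabs; ring. }
    have Hdot : dot (J (seg a b s) i) (vsub (seg a b (s + hh)) (seg a b s)) = hh * dot (J (seg a b s) i) (vsub b a).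
    { rewrite /dot -fsum_scal; apply fsum_ext => j; rewrite /vsub /seg; ring. }
    have Hlt : vnorm (vsub (seg a b (s + hh)) (seg a b s)) < d.
    { rewrite Hv. have Ha0 := Rabs_pos hh.
      have : Rabs hh * (N + 1) < d by apply (Rmult_lt_reg_r (/ (N + 1))); [apply Rinv_0_lt_compat; lra|];
        rewrite Rmult_assoc Rinv_r; [lra|lra].
      nra. }
    have Hk := Hd2 _ Hlt.
    have Hc := vnorm_comp (fun i0 => H (seg a b (s + hh)) i0 - H (seg a b s) i0 -
                  dot (J (seg a b s) i0) (vsub (seg a b (s + hh)) (seg a b s))) i.
    simpl in Hc. rewrite Hdot Hv in Hc Hk.
    have -> : (H (seg a b (s + hh)) i - H (seg a b s) i) / hh - dot (J (seg a b s) i) (vsub b a)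
            = (H (seg a b (s + hh)) i - H (seg a b s) i - hh * dot (J (seg a b s) i) (vsub b a)) / hh
      by field.
    apply: (div_bound _ _ (eps / 2 / (N + 1) * N) eps Hh).
    - have := Rabs_pos hh; nra.
    - have Hq : eps / 2 / (N + 1) * N <= eps / 2.
      { have -> : eps / 2 / (N + 1) * N = eps / 2 - eps / 2 / (N + 1) by field; lra.
        lra. }
      lra. }
  have Hs1 : seg a b 1 = b by apply functional_extensionality => j; rewrite /seg; ring.
  have Hs0 : seg a b 0 = a by apply functional_extensionality => j; rewrite /seg; ring.
  have [c [Hc Hc2]] := MVT_cor2 (fun s => H (seg a b s) i) (fun s => dot (J (seg a b s) i) (vsub b a)) 0 1 Rlt_0_1
     (fun s _ => Hder s).
  simpl in Hc; rewrite Hs1 Hs0 in Hc; rewrite Hc Rminus_0_r Rmult_1_r.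
  apply dot_bound => j; apply HL.
  apply: (Rle_lt_trans _ ((1 - c) * vnorm (vsub a w0) + c * vnorm (vsub b w0))); last first.
  { have h1 : 0 < (1 - c) * (r - vnorm (vsub a w0)) by apply Rmult_lt_0_compat; lra.
    have h2 : 0 < c * (r - vnorm (vsub b w0)) by apply Rmult_lt_0_compat; lra.
    lra. }
  rewrite /vnorm -!fsum_scal -fsum_plus; apply fsum_le => k; rewrite /vsub /seg.
  have -> : a k + c * (b k - a k) - w0 k = (1 - c) * (a k - w0 k) + c * (b k - w0 k) by ring.
  apply: Rle_trans; first apply Rabs_triang.
  rewrite !Rabs_mult (Rabs_right (1 - c)) ?(Rabs_right c); lra.
Qed.

From Coquelicot Require Import Coquelicot.
From Stdlib Require Import Classical ClassicalEpsilon.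

Definition lipP {n} (Hf : vec n -> vec n) := forall w0 : vec n,
  exists r, 0 < r /\ exists L, 0 <= L /\ forall a b, vnorm (vsub a w0) < r -> vnorm (vsub b w0) < r ->
    forall i, Rabs (Hf b i - Hf a i) <= L * vnorm (vsub b a).

Section Uniq.
Variables (n : nat) (Hf : vec n -> vec n) (T : R) (m : R -> R) (z y : R -> vec n).
Hypotheses (HT : 0 < T) (Hlip : lipP Hf) (Hm : cont_on 0 T m)
  (Hz : forall i, cont_on 0 T (fun t => z t i)) (Hy : forall i, cont_on 0 T (fun t => y t i))
  (Hdz : forall t i, 0 < t < T -> derivable_pt_lim (fun u => z u i) t (m t * Hf (z t) i))
  (Hdy : forall t i, 0 < t < T -> derivable_pt_lim (fun u => y u i) t (m t * Hf (y t) i)).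

Lemma uniq_step c : 0 <= c < T -> (forall i, z c i = y c i) ->
  exists d, 0 < d /\ forall u, c <= u <= c + d -> u <= T -> forall i, z u i = y u i.
Proof.
  move=> Hc Hzy.
  have [r [Hr [L [HL Hl]]]] := Hlip (z c).
  have Hn := pos_INR n.
  set rr := r / (INR n + 1).
  have Hrr : 0 < rr by apply Rdiv_lt_0_compat; lra.
  have [d1 [Hd1 H1]] : exists d, 0 < d /\ forall i u, 0 <= u <= T -> Rabs (u - c) < d ->
       Rabs (z u i - z c i) < rr /\ Rabs (y u i - y c i) < rr.
  { apply: (@fin_delta_ord n (fun i d => forall u, 0 <= u <= T -> Rabs (u - c) < d ->
       Rabs (z u i - z c i) < rr /\ Rabs (y u i - y c i) < rr)).
    - move=> i d d' Hd Hp u Hu Huc; apply Hp => //; lra.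
    - move=> i.
      have Hc' : 0 <= c <= T by lra.
      have [da [Hda Ha]] := Hz i c Hc' rr Hrr.
      have [db [Hdb Hb]] := Hy i c Hc' rr Hrr.
      exists (Rmin da db); split; first by apply Rmin_glb_lt.
      move=> u Hu Huc; have := Rmin_l da db; have := Rmin_r da db => ??.
      split; [apply Ha | apply Hb] => //; lra. }
  have Hball : forall u, 0 <= u <= T -> Rabs (u - c) < d1 ->
      vnorm (vsub (z u) (z c)) < r /\ vnorm (vsub (y u) (z c)) < r.
  { move=> u Hu Huc.
    have Hsum : INR n * rr < r.
    { have -> : INR n * rr = r - rr by rewrite /rr; field; lra. lra. }
    split; (apply: Rle_lt_trans; last exact Hsum); rewrite -fsum_const; apply fsum_le => i;
      have [Ha Hb] := H1 i u Hu Huc; rewrite /vsub.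
    - lra.
    - rewrite Hzy; lra. }
  have Hc' : 0 <= c <= T by lra.
  have [d2 [Hd2 H2]] := Hm c Hc' 1 Rlt_0_1.
  set Mb := Rabs (m c) + 1.
  have HM : forall u, 0 <= u <= T -> Rabs (u - c) < d2 -> Rabs (m u) <= Mb.
  { move=> u Hu Huc; have := H2 u Hu Huc; have := Rabs_triang_inv (m u) (m c); rewrite /Mb; lra. }
  have HMb : 0 <= Mb by rewrite /Mb; have := Rabs_pos (m c); lra.
  set K := INR n * Mb * L.
  have HK : 0 <= K by rewrite /K; apply Rmult_le_pos => //; apply Rmult_le_pos.
  set d := Rmin (d1 / 2) (Rmin (d2 / 2) (1 / (2 * K + 2))).
  have Hd : 0 < d by apply Rmin_glb_lt; [lra| apply Rmin_glb_lt; [lra| apply Rdiv_lt_0_compat; lra]].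
  have Hdd1 : d <= d1 / 2 by apply Rmin_l.
  have Hdd2 : d <= d2 / 2 by rewrite /d; have := Rmin_r (d1/2) (Rmin (d2 / 2) (1 / (2 * K + 2))); have := Rmin_l (d2 / 2) (1 / (2 * K + 2)); lra.
  have HdK : d * K <= 1 / 2.
  { have h : d <= 1 / (2 * K + 2) by rewrite /d; have := Rmin_r (d1/2) (Rmin (d2 / 2) (1 / (2 * K + 2))); have := Rmin_r (d2 / 2) (1 / (2 * K + 2)); lra.
    have h2 : d * (2 * K + 2) <= 1.
    { have := Rmult_le_compat_r (2 * K + 2) _ _ ltac:(lra) h.
      have -> : 1 / (2 * K + 2) * (2 * K + 2) = 1 by field; lra. done. }
    nra. }
  exists d; split => //.
  set E := fun v => exists u, c <= u <= c + d /\ u <= T /\ v = vnorm (vsub (z u) (y u)).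
  have HinU : forall u, c <= u <= c + d -> u <= T -> 0 <= u <= T /\ Rabs (u - c) < d1 /\ Rabs (u - c) < d2.
  { move=> u Hu HuT; split; first lra. rewrite Rabs_right; lra. }
  have [Q [HQ1 HQ2]] : {Q | is_lub E Q}.
  { apply completeness.
    - exists (2 * r) => v [u [Hu [HuT ->]]].
      have [h0 [h1 h2]] := HinU u Hu HuT. have [ha hb] := Hball u h0 h1.
      have := vnorm_triang (z u) (y u) (z c); lra.
    - exists (vnorm (vsub (z c) (y c))); exists c; split; [lra| split; [lra| done]]. }
  have HQ0 : 0 <= Q.
  { apply: (Rle_trans _ (vnorm (vsub (z c) (y c)))); first exact: vnorm_ge0.
    apply HQ1; exists c; split; [lra| split; [lra| done]]. }
  have Hcomp : forall u, c <= u <= c + d -> u <= T -> forall i, Rabs (z u i - y u i) <= d * Mb * L * Q.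
  { move=> u Hu HuT i.
    have Hpos : 0 <= d * Mb * L * Q by apply Rmult_le_pos => //; apply Rmult_le_pos => //; apply Rmult_le_pos; lra.
    case: (Req_dec u c) => [->|Hne].
    { rewrite Hzy Rminus_diag Rabs_R0 //. }
    have Hcu : c < u by lra.
    set f := fun t => z (clampT T t) i - y (clampT T t) i.
    have P1 : forall x, Rmin c u < x < Rmax c u -> is_derive f x (m x * (Hf (z x) i - Hf (y x) i)).
    { rewrite Rmin_left ?Rmax_right; try lra. move=> x Hx.
      apply is_derive_Reals; rewrite /f.
      have -> : m x * (Hf (z x) i - Hf (y x) i) = m x * Hf (z x) i - m x * Hf (y x) i by ring.
      apply: (derivable_pt_lim_minus (fun t => z (clampT T t) i) (fun t => y (clampT T t) i)).
      - apply: (@deriv_clamp T (fun t => z t i)); [lra| apply Hdz; lra].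
      - apply: (@deriv_clamp T (fun t => y t i)); [lra| apply Hdy; lra]. }
    have P2 : forall x, Rmin c u <= x <= Rmax c u -> continuity_pt f x.
    { move=> x _; rewrite /f. apply: continuity_pt_minus.
      - apply: (@cont_clamp T (fun t => z t i)); [lra| apply Hz].
      - apply: (@cont_clamp T (fun t => y t i)); [lra| apply Hy]. }
    have [xi [Hxi Hxi2]] := MVT_gen f c u (fun t => m t * (Hf (z t) i - Hf (y t) i)) P1 P2.
    rewrite Rmin_left ?Rmax_right in Hxi; try lra.
    move: Hxi2; rewrite /f !clamp_id; try lra. rewrite Hzy Rminus_diag Rminus_0_r => ->.
    have [h0 [h1 h2]] := HinU xi ltac:(lra) ltac:(lra).
    have HmX := HM xi h0 h2.
    have HzX := Hball xi h0 h1.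
    have Hlx := Hl (y xi) (z xi) (proj2 HzX) (proj1 HzX) i.
    have HQx : vnorm (vsub (z xi) (y xi)) <= Q by apply HQ1; exists xi; split; [lra| split; [lra| done]].
    rewrite !Rabs_mult (Rabs_right (u - c)); last lra.
    have Hl0 : L * vnorm (vsub (z xi) (y xi)) <= L * Q by apply Rmult_le_compat_l.
    have Hab := Rabs_pos (m xi). have Hab2 := Rabs_pos (Hf (z xi) i - Hf (y xi) i).
    have e1 : Rabs (m xi) * Rabs (Hf (z xi) i - Hf (y xi) i) <= Mb * (L * Q).
    { apply Rmult_le_compat => //; lra. }
    have e2 : 0 <= Mb * (L * Q) by apply Rmult_le_pos => //; apply Rmult_le_pos.
    have e3 : u - c <= d by lra.
    have e4 : 0 <= u - c by lra. have := Rmult_le_compat _ _ _ _ (Rmult_le_pos _ _ Hab Hab2) e4 e1 e3 => Hfin; apply: (Rle_trans _ _ _ Hfin); right; ring. }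
  have Hub : is_upper_bound E (Q / 2).
  { move=> v [u [Hu [HuT ->]]].
    apply: Rle_trans; first apply: (@fsum_le n _ (fun _ => d * Mb * L * Q)) => j; first exact: Hcomp.
    rewrite fsum_const. have -> : INR n * (d * Mb * L * Q) = (d * K) * Q by rewrite /K; ring.
    nra. }
  have HQ : Q <= 0 by have := HQ2 _ Hub; lra.
  move=> u Hu HuT i.
  have Hv : vnorm (vsub (z u) (y u)) <= 0.
  { apply: Rle_trans; last exact HQ. apply HQ1; exists u; split => //; split => //. }
  have Hi : Rabs (z u i - y u i) <= vnorm (vsub (z u) (y u)) := vnorm_comp _ i.
  have Hp := Rabs_pos (z u i - y u i).
  have Habs : Rabs (z u i - y u i) = 0 by lra.
  move: Habs; split_Rabs; lra.
Qed.
Lemma uniq_sol : z 0 = y 0 -> forall i, z T i = y T i.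
Proof.
  move=> H0.
  set S := fun t => 0 <= t <= T /\ forall u, 0 <= u <= t -> forall i, z u i = y u i.
  have S0 : S 0.
  { split; first lra. move=> u Hu i; have -> : u = 0 by lra. by rewrite H0. }
  have [ts [Hts1 Hts2]] : {ts | is_lub S ts}.
  { apply completeness; [exists T => t [Ht _]; lra | by exists 0]. }
  have Hts0 : 0 <= ts by apply Hts1.
  have HtsT : ts <= T by apply Hts2 => t [Ht _]; lra.
  have Hbelow : forall u, 0 <= u < ts -> forall i, z u i = y u i.
  { move=> u Hu i.
    case: (classic (exists s, S s /\ u < s)) => [[s [[Hs1 Hs2] Hus]]|Hno].
    - apply Hs2; lra.
    - have : ts <= u.
      { apply Hts2 => s Hs. apply Rnot_lt_le => Hlt; apply Hno; by exists s. }
      lra. }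
  have Hat : forall i, z ts i = y ts i.
  { move=> i. case: (Req_dec ts 0) => [->|Hne]; first by rewrite H0.
    apply NNPP => Hneq.
    have Hpos : 0 < Rabs (z ts i - y ts i) / 2.
    { apply Rdiv_lt_0_compat; [apply Rabs_pos_lt; lra| lra]. }
    have Hts' : 0 <= ts <= T by lra.
    have [da [Hda Ha]] := Hz i ts Hts' _ Hpos.
    have [db [Hdb Hb]] := Hy i ts Hts' _ Hpos.
    set dd := Rmin (Rmin da db) ts.
    have Hdd : 0 < dd by apply Rmin_glb_lt; [apply Rmin_glb_lt|lra].
    have h1 : dd <= Rmin da db := Rmin_l _ _. have h2 : dd <= ts := Rmin_r _ _.
    have h3 := Rmin_l da db. have h4 := Rmin_r da db.
    set u := ts - dd / 2.
    have Hu : 0 <= u <= T by rewrite /u; lra.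
    have Hut : Rabs (u - ts) < da /\ Rabs (u - ts) < db by rewrite /u; split; split_Rabs; lra.
    have e1 := Ha u Hu (proj1 Hut). have e2 := Hb u Hu (proj2 Hut).
    have Heq : z u i = y u i by apply Hbelow; rewrite /u; lra.
    rewrite Heq in e1.
    have := Rabs_triang (y u i - z ts i) (- (y u i - y ts i)).
    rewrite Rabs_Ropp. have -> : y u i - z ts i + - (y u i - y ts i) = - (z ts i - y ts i) by ring.
    rewrite Rabs_Ropp. lra. }
  have Sts : S ts.
  { split; first lra. move=> u Hu i. case: (Req_dec u ts) => [->|Hne]; first exact: Hat.
    apply Hbelow; lra. }
  case: (Req_dec ts T) => [Heq|Hne].
  - move=> i; apply (proj2 Sts); lra.
  - have [d [Hd Hstep]] := uniq_step ts ltac:(lra) Hat.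
    have : S (Rmin (ts + d) T).
    { split; first by split; [apply Rmin_glb; lra | apply Rmin_r].
      move=> u Hu i. case: (Rle_lt_dec u ts) => Hut.
      - apply (proj2 Sts); lra.
      - have h1 := Rmin_l (ts + d) T. have h2 := Rmin_r (ts + d) T.
        apply Hstep; lra. }
    move=> HS; have := Hts1 _ HS.
    have : ts < Rmin (ts + d) T by apply Rmin_glb_lt; lra.
    lra.
Qed.
End Uniq.

Lemma scal_deriv f x l a c : derivable_pt_lim f x l -> derivable_pt_lim (fun t => a * (f t - c)) x (a * l).
Proof. move=> Hf eps Heps.
  have He : 0 < eps / (Rabs a + 1) by apply Rdiv_lt_0_compat; [lra| have := Rabs_pos a; lra].
  have [d Hd] := Hf _ He. exists d => hh Hh Hhh.
  have -> : (a * (f (x + hh) - c) - a * (f x - c)) / hh - a * l = a * ((f (x + hh) - f x) / hh - l) by field.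
  rewrite Rabs_mult. have := Hd hh Hh Hhh => H1. have Ha := Rabs_pos a.
  have H2 : Rabs a * Rabs ((f (x + hh) - f x) / hh - l) <= Rabs a * (eps / (Rabs a + 1)).
  { apply Rmult_le_compat_l; lra. }
  have H3 : Rabs a * (eps / (Rabs a + 1)) < eps.
  { have -> : Rabs a * (eps / (Rabs a + 1)) = eps - eps / (Rabs a + 1) by field; lra. lra. }
  lra. Qed.

Lemma chain n (Phi : vec n -> R) (gr : vec n) (gam : R -> vec n) (v : vec n) s :
  frechet_grad Phi (gam s) gr -> (forall i, derivable_pt_lim (fun t => gam t i) s (v i)) ->
  derivable_pt_lim (fun t => Phi (gam t)) s (dot gr v).
Proof.
  move=> HF Hg eps Heps.
  set q := fun t => dot gr (vsub (gam t) (gam s)).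
  have Hq : derivable_pt_lim q s (dot gr v).
  { rewrite /q /dot /vsub. apply: (@fsum_derive n (fun i t => gr i * (gam t i - gam s i)) (fun i => gr i * v i) s) => i.
    exact: scal_deriv. }
  have Hq0 : q s = 0.
  { rewrite /q /dot /vsub. rewrite (@fsum_ext n _ (fun _ => 0)); first by rewrite fsum_const; ring.
    move=> i; ring. }
  have [d0 [Hd0 H0]] : exists d, 0 < d /\ forall i k, k <> 0 -> Rabs k < d ->
      Rabs ((gam (s + k) i - gam s i) / k - v i) < 1.
  { apply: (@fin_delta_ord n (fun i d => forall k, k <> 0 -> Rabs k < d ->
      Rabs ((gam (s + k) i - gam s i) / k - v i) < 1)).
    - move=> i d d' Hd Hp k Hk Hkd; apply Hp => //; lra.
    - move=> i; have [d Hd] := Hg i 1 Rlt_0_1; exists d; split; [apply cond_pos| exact Hd]. }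
  set V := fsum n (fun i => Rabs (v i) + 1).
  have HV : 0 <= V by apply fsum_ge0 => i; have := Rabs_pos (v i); lra.
  have Hbd : forall k, k <> 0 -> Rabs k < d0 -> vnorm (vsub (gam (s + k)) (gam s)) <= Rabs k * V.
  { move=> k Hk Hkd. rewrite /vnorm /V -fsum_scal; apply fsum_le => i; rewrite /vsub.
    have := H0 i k Hk Hkd => Hi.
    have -> : gam (s + k) i - gam s i = k * ((gam (s + k) i - gam s i) / k) by field.
    rewrite Rabs_mult; apply Rmult_le_compat_l; first exact: Rabs_pos.
    have := Rabs_triang_inv ((gam (s + k) i - gam s i) / k) (v i). lra. }
  have He' : 0 < eps / 2 / (V + 1) by apply Rdiv_lt_0_compat; lra.
  have [dF [HdF HF2]] := HF _ He'.
  have [dq Hdq] := Hq (eps / 2) ltac:(lra).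
  have Hdp : 0 < Rmin d0 (Rmin dq (dF / (V + 1))).
  { apply Rmin_glb_lt => //; apply Rmin_glb_lt; [apply cond_pos| apply Rdiv_lt_0_compat; lra]. }
  exists (mkposreal _ Hdp) => k Hk Hkd; simpl in Hkd.
  have k1 : Rabs k < d0 by have := Rmin_l d0 (Rmin dq (dF / (V + 1))); lra.
  have k2 : Rabs k < dq by have := Rmin_r d0 (Rmin dq (dF / (V + 1))); have := Rmin_l dq (dF / (V + 1)); lra.
  have k3 : Rabs k < dF / (V + 1) by have := Rmin_r d0 (Rmin dq (dF / (V + 1))); have := Rmin_r dq (dF / (V + 1)); lra.
  have Hb := Hbd k Hk k1.
  have Hak := Rabs_pos k.
  have Hlt : vnorm (vsub (gam (s + k)) (gam s)) < dF.
  { apply: Rle_lt_trans; first exact Hb.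
    have : Rabs k * (V + 1) < dF.
    { have := Rmult_lt_compat_r (V + 1) _ _ ltac:(lra) k3.
      have -> : dF / (V + 1) * (V + 1) = dF by field; lra. done. }
    nra. }
  have HF3 := HF2 _ Hlt.
  have Hq2 := Hdq k Hk k2. rewrite Hq0 Rminus_0_r in Hq2.
  have -> : (Phi (gam (s + k)) - Phi (gam s)) / k - dot gr v =
     (Phi (gam (s + k)) - Phi (gam s) - q (s + k)) / k + (q (s + k) / k - dot gr v) by rewrite /Rdiv; field.
  apply: Rle_lt_trans; first apply Rabs_triang.
  have : Rabs ((Phi (gam (s + k)) - Phi (gam s) - q (s + k)) / k) < eps / 2.
  { apply: (div_bound _ _ (eps / 2 / (V + 1) * V)) => //.
    - apply: Rle_trans; first exact HF3.
      have := Rmult_le_compat_l (eps / 2 / (V + 1)) _ _ ltac:(lra) Hb. nra.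
    - have -> : eps / 2 / (V + 1) * V = eps / 2 - eps / 2 / (V + 1) by field; lra. lra. }
  lra.
Qed.

Lemma cont_of_pt f x : continuity_pt f x -> continuous f x.
Proof. move=> H; exact: (proj1 (continuity_pt_filterlim f x) H). Qed.

Lemma exRInt_cont F a b : (forall t, continuity_pt F t) -> ex_RInt F a b.
Proof. move=> H; apply: ex_RInt_continuous => t _; exact: cont_of_pt. Qed.

Lemma Int_RInt T f F : 0 <= T -> (forall t, continuity_pt F t) -> (forall t, 0 <= t <= T -> f t = F t) ->
  Defs.Int f 0 T = RInt F 0 T.
Proof.
  move=> HT HF Hfe.
  have HexF : ex_RInt F 0 T by apply exRInt_cont.
  have Hext : forall x, Rmin 0 T < x < Rmax 0 T -> F x = f x.
  { rewrite Rmin_left ?Rmax_right // => x Hx; rewrite Hfe //; lra. }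
  have Hexf : ex_RInt f 0 T by apply: (ex_RInt_ext F) => //.
  have Hri := ex_RInt_Reals_0 _ _ _ Hexf.
  have Hex : exists v, exists pr : Riemann_integrable f 0 T, RiemannInt pr = v by exists (RiemannInt Hri), Hri.
  have [pr Hpr] := epsilon_spec (inhabits 0) _ Hex.
  rewrite /Defs.Int -Hpr -RInt_Reals. apply: RInt_ext => x Hx; symmetry; exact: Hext.
Qed.

Lemma lim_cont f x l : derivable_pt_lim f x l -> continuity_pt f x.
Proof. move=> H; apply derivable_continuous_pt; by exists l. Qed.

Lemma tau_deriv (M : R -> R) t : (forall x, continuity_pt M x) ->
  derivable_pt_lim (fun b => RInt M 0 b) t (M t).
Proof. move=> HM. apply is_derive_Reals.
  apply: (is_derive_RInt M (fun b => RInt M 0 b) 0 t).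
  - apply: filter_forall => b; apply (@RInt_correct R_CompleteNormedModule M 0 b); exact: exRInt_cont.
  - exact: cont_of_pt. Qed.

Lemma auto_path n s (h : vec n -> vec s -> vec n) p z0 zh T m :
  0 < T -> auto_sol h p z0 zh -> cont_on 0 T m ->
  zh (RInt (fun t => m (clampT T t)) 0 0) = z0 /\
  (forall i, cont_on 0 T (fun t => zh (RInt (fun t => m (clampT T t)) 0 t) i)) /\
  (forall t i, 0 < t < T -> derivable_pt_lim (fun u => zh (RInt (fun t => m (clampT T t)) 0 u) i) t
        (m t * h (zh (RInt (fun t => m (clampT T t)) 0 t)) p i)).
Proof.
  move=> HT [H0 Hd] Hm.
  set M := fun t => m (clampT T t).
  have HM : forall x, continuity_pt M x by apply cont_clamp => //; lra.
  have Hder : forall t i, derivable_pt_lim (fun u => zh (RInt M 0 u) i) t (h (zh (RInt M 0 t)) p i * M t).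
  { move=> t i. apply: (derivable_pt_lim_comp (fun b => RInt M 0 b) (fun u => zh u i)).
    - exact: tau_deriv.
    - exact: Hd. }
  split; [| split].
  - rewrite RInt_point; exact H0.
  - move=> i; apply cont_on_of => x; exact: lim_cont (Hder x i).
  - move=> t i Ht. have := Hder t i. rewrite /M clamp_id; last lra.
    by rewrite Rmult_comm.
Qed.

Lemma Zeq n s (h : vec n -> vec s -> vec n) p z0 zh (Z : (R -> R) -> R -> vec n) T m :
  0 < T -> C1_vector (fun x => h x p) -> auto_sol h p z0 zh ->
  is_sol h p z0 T m (Z m) -> cont_on 0 T m -> Z m T = zh (Defs.Int m 0 T).
Proof.
  move=> HT HC Ha [Hz0 [Hzc Hzd]] Hm.
  have [Hy0 [Hyc Hyd]] := @auto_path n s h p z0 zh T m HT Ha Hm.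
  have Hlip : lipP (fun x => h x p) by apply: lip_local.
  rewrite (@Int_RInt T m (fun t => m (clampT T t))); first last.
  - move=> t Ht; rewrite clamp_id //.
  - apply cont_clamp => //; lra.
  - lra.
  apply functional_extensionality => i.
  apply: (@uniq_sol n (fun x => h x p) T m (Z m) (fun t => zh (RInt (fun t => m (clampT T t)) 0 t))) => //.
  by rewrite Hz0 Hy0.
Qed.

Lemma cplus f g x : continuity_pt f x -> continuity_pt g x -> continuity_pt (fun t => f t + g t) x.
Proof. exact: continuity_pt_plus. Qed.
Lemma cmult f g x : continuity_pt f x -> continuity_pt g x -> continuity_pt (fun t => f t * g t) x.
Proof. exact: continuity_pt_mult. Qed.
Lemma ccst c x : continuity_pt (fun _ => c) x.
Proof. exact: continuity_pt_const. Qed.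
Lemma ccomp f g x : continuity_pt f x -> continuity_pt g (f x) -> continuity_pt (fun t => g (f t)) x.
Proof. exact: continuity_pt_comp. Qed.

Lemma lin_deriv a b x : derivable_pt_lim (fun u => a + u * b) x b.
Proof. move=> eps Heps; exists (mkposreal _ Rlt_0_1) => hh Hh _.
  have -> : (a + (x + hh) * b - (a + x * b)) / hh - b = 0 by field.
  rewrite Rabs_R0; lra. Qed.

Lemma G_deriv g T mu dmu : 0 < T -> C1_real g -> cont_on 0 T mu -> cont_on 0 T dmu ->
  exists l, derivable_pt_lim (fun e => Gfun g T (pert mu dmu e)) 0 l.
Proof.
  move=> HT [g' [Hg' Hgc]] Hmu Hdmu.
  set M := fun t => mu (clampT T t). set D := fun t => dmu (clampT T t).
  have HM : forall x, continuity_pt M x by apply cont_clamp => //; lra.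
  have HD : forall x, continuity_pt D x by apply cont_clamp => //; lra.
  have Hgcont : forall x, continuity_pt g x by move=> x; exact: lim_cont (Hg' x).
  have HF : forall e x, continuity_pt (fun t => g (M t + e * D t)) x.
  { move=> e x; apply: ccomp; last exact: Hgcont.
    apply: cplus => //; apply: cmult => //; exact: ccst. }
  have -> : (fun e => Gfun g T (pert mu dmu e)) = (fun e => RInt (fun t => g (M t + e * D t)) 0 T).
  { apply functional_extensionality => e; rewrite /Gfun /pert.
    apply: Int_RInt => //; first lra.
    move=> t Ht; rewrite /M /D clamp_id //. }
  have Hd : forall t x, derivable_pt_lim (fun u => g (M t + u * D t)) x (g' (M t + x * D t) * D t).
  { move=> t x; apply: (derivable_pt_lim_comp (fun u => M t + u * D t) g); first exact: lin_deriv.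
    exact: Hg'. }
  eexists; apply is_derive_Reals.
  apply: (is_derive_RInt_param (fun u t => g (M t + u * D t))).
  - apply: filter_forall => x t _; exists (g' (M t + x * D t) * D t); apply is_derive_Reals; exact: Hd.
  - move=> t _.
    apply: (continuity_2d_pt_ext (fun u v => g' (M v + u * D v) * D v)).
    + move=> u v; symmetry; apply is_derive_unique; apply is_derive_Reals; exact: Hd.
    + have HDv : continuity_2d_pt (fun _ v => D v) 0 t.
      { apply: (continuity_1d_2d_pt_comp D (fun _ v => v)); [exact: HD| exact: continuity_2d_pt_id2]. }
      apply: continuity_2d_pt_mult => //.
      apply: (continuity_1d_2d_pt_comp g' (fun u v => M v + u * D v)); first exact: Hgc.
      apply: continuity_2d_pt_plus.
      * apply: (continuity_1d_2d_pt_comp M (fun _ v => v)); [exact: HM| exact: continuity_2d_pt_id2].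
      * apply: continuity_2d_pt_mult => //; exact: continuity_2d_pt_id1.
  - apply: filter_forall => x; exact: exRInt_cont.
Qed.

Lemma RInt_lin M D e T : ex_RInt M 0 T -> ex_RInt D 0 T ->
  RInt (fun t => M t + e * D t) 0 T = RInt M 0 T + e * RInt D 0 T.
Proof.
  move=> HM HD.
  have := RInt_plus M (fun t => e * D t) 0 T HM (ex_RInt_scal D 0 T e HD).
  have := RInt_scal D 0 T e HD.
  rewrite /plus /scal /= /mult /= => H1 H2. by rewrite H2 H1.
Qed.

Lemma mul_deriv f x l a : derivable_pt_lim f x l -> derivable_pt_lim (fun t => a * f t) x (a * l).
Proof. move=> H. have := @scal_deriv f x l a 0 H.
  have -> : (fun t => a * (f t - 0)) = (fun t => a * f t) by apply functional_extensionality => t; ring.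
  done. Qed.

Lemma plus_deriv f g x l1 l2 : derivable_pt_lim f x l1 -> derivable_pt_lim g x l2 ->
  derivable_pt_lim (fun t => f t + g t) x (l1 + l2).
Proof. move=> H1 H2; exact: derivable_pt_lim_plus. Qed.
Arguments plus_deriv {f g x l1 l2}. Arguments mul_deriv {f x l} a.
Theorem theorem1 (n s : nat) (h : vec n -> vec s -> vec n) (p : vec s) (z0 : vec n)
    (Phi : vec n -> R) (DPhi : vec n -> vec n) (g : R -> R)
    (Z : (R -> R) -> R -> vec n) (T C1 : R) (mu : R -> R) :
  (1 <= n)%nat -> (1 <= s)%nat ->
  (forall q : vec s, C1_vector (fun x => h x q)) ->
  (exists zh : R -> vec n,
      auto_sol h p z0 zh /\ forall w : R -> vec n, auto_sol h p z0 w -> w = zh) ->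
  C1_scalar Phi DPhi ->
  C1_real g -> (forall x, 0 < g x) ->
  0 < T -> 0 < C1 ->
  (forall m : R -> R, cont_on 0 T m -> is_sol h p z0 T m (Z m)) ->
  cont_on 0 T mu -> (forall t, 0 <= t <= T -> 0 < mu t) ->
  Phi_h DPhi h p (Z mu T) <> 0 ->
  (* the Gateaux derivatives exist *)
  (forall dmu : R -> R, cont_on 0 T dmu ->
     (exists l, derivable_pt_lim (fun e => Phi (Z (pert mu dmu e) T)) 0 l) /\
     (exists l, derivable_pt_lim (fun e => Gfun g T (pert mu dmu e)) 0 l) /\
     (exists l, derivable_pt_lim (fun e => Ifun T (pert mu dmu e)) 0 l)) /\
  (* (a) <-> (b) *)
  ((Gfun g T mu = C1 /\
     exists lam : R, forall dmu : R -> R, cont_on 0 T dmu ->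
       derivable_pt_lim
         (fun e => Phi (Z (pert mu dmu e) T) + lam * Gfun g T (pert mu dmu e)) 0 0)
   <->
   (Gfun g T mu = C1 /\
     exists lamr : R, forall dmu : R -> R, cont_on 0 T dmu ->
       derivable_pt_lim
         (fun e => Ifun T (pert mu dmu e) + lamr * Gfun g T (pert mu dmu e)) 0 0)) /\
  (* multipliers correspond via lam_ref = lam / Phi_h(mu) *)
  (forall lam : R,
     (forall dmu : R -> R, cont_on 0 T dmu ->
       derivable_pt_lim
         (fun e => Phi (Z (pert mu dmu e) T) + lam * Gfun g T (pert mu dmu e)) 0 0)
     <->
     (forall dmu : R -> R, cont_on 0 T dmu ->
       derivable_pt_lim
         (fun e => Ifun T (pert mu dmu e)
                   + (lam / Phi_h DPhi h p (Z mu T)) * Gfun g T (pert mu dmu e)) 0 0)).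
Proof.
  move=> _ _ Hh [zh [Hzh _]] [HPhiF _] Hg _ HT _ HZ Hmu _ HP.
  set P := Phi_h DPhi h p (Z mu T).
  have HC := Hh p.
  set M := fun t => mu (clampT T t).
  have HM : forall x, continuity_pt M x by apply cont_clamp => //; lra.
  have HIM : Defs.Int mu 0 T = RInt M 0 T.
  { apply: Int_RInt => //; first lra. move=> t Ht; rewrite /M clamp_id //. }
  have HZmu : Z mu T = zh (RInt M 0 T).
  { rewrite -HIM; apply: (@Zeq n s h p z0 zh Z T mu HT HC Hzh) => //; exact: HZ. }
  have Hbasic : forall dmu, cont_on 0 T dmu ->
     derivable_pt_lim (fun e => Ifun T (pert mu dmu e)) 0 (Defs.Int dmu 0 T) /\
     derivable_pt_lim (fun e => Phi (Z (pert mu dmu e) T)) 0 (P * Defs.Int dmu 0 T).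
  { move=> dmu Hdmu.
    set D := fun t => dmu (clampT T t).
    have HD : forall x, continuity_pt D x by apply cont_clamp => //; lra.
    have HID : Defs.Int dmu 0 T = RInt D 0 T.
    { apply: Int_RInt => //; first lra. move=> t Ht; rewrite /D clamp_id //. }
    have HIe : forall e, Ifun T (pert mu dmu e) = RInt M 0 T + e * RInt D 0 T.
    { move=> e; rewrite /Ifun -RInt_lin; try exact: exRInt_cont.
      apply: Int_RInt => //; first lra.
      - move=> x; apply: cplus => //; apply: cmult => //; exact: ccst.
      - move=> t Ht; rewrite /pert /M /D clamp_id //. }
    have Hpc : forall e, cont_on 0 T (pert mu dmu e).
    { move=> e; apply: (@cont_on_ext T (fun t => M t + e * D t)).
      - move=> t Ht; rewrite /pert /M /D clamp_id //.
      - apply cont_on_of => x; apply: cplus => //; apply: cmult => //; exact: ccst. }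
    have HAe : forall e, Phi (Z (pert mu dmu e) T) = Phi (zh (RInt M 0 T + e * RInt D 0 T)).
    { move=> e; rewrite -HIe; congr Phi. apply: (@Zeq n s h p z0 zh Z T _ HT HC Hzh); [apply: HZ; exact: Hpc | exact: Hpc]. }
    rewrite HID; split.
    - have -> : (fun e => Ifun T (pert mu dmu e)) = (fun e => RInt M 0 T + e * RInt D 0 T)
        by apply functional_extensionality => e; exact: HIe.
      exact: lin_deriv.
    - have -> : (fun e => Phi (Z (pert mu dmu e) T)) = (fun e => Phi (zh (RInt M 0 T + e * RInt D 0 T)))
        by apply functional_extensionality => e; exact: HAe.
      have Hc := @chain n Phi (DPhi (zh (RInt M 0 T + 0 * RInt D 0 T))) zh
                 (h (zh (RInt M 0 T + 0 * RInt D 0 T)) p) (RInt M 0 T + 0 * RInt D 0 T)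
                 (HPhiF _) (fun i => proj2 Hzh _ i).
      have := derivable_pt_lim_comp (fun e => RInt M 0 T + e * RInt D 0 T) (fun u => Phi (zh u)) 0 _ _
                (lin_deriv _ _ 0) Hc.
      have -> : RInt M 0 T + 0 * RInt D 0 T = RInt M 0 T by ring.
      rewrite /P /Phi_h HZmu Rmult_comm. done. }
  have Gd := fun dmu Hd => @G_deriv g T mu dmu HT Hg Hmu Hd.
  have key : forall lam,
     (forall dmu : R -> R, cont_on 0 T dmu ->
       derivable_pt_lim
         (fun e => Phi (Z (pert mu dmu e) T) + lam * Gfun g T (pert mu dmu e)) 0 0)
     <->
     (forall dmu : R -> R, cont_on 0 T dmu ->
       derivable_pt_lim
         (fun e => Ifun T (pert mu dmu e) + (lam / P) * Gfun g T (pert mu dmu e)) 0 0).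
  { move=> lam; split => H dmu Hdmu.
    - have [HI HA] := Hbasic dmu Hdmu. have [l Hl] := Gd dmu Hdmu.
      have E1 := uniqueness_limite _ _ _ _ (H dmu Hdmu) (plus_deriv HA (mul_deriv lam Hl)).
      have E2 : Defs.Int dmu 0 T + lam / P * l = 0.
      { have -> : Defs.Int dmu 0 T + lam / P * l = (P * Defs.Int dmu 0 T + lam * l) / P by field.
        rewrite -E1; field => //. }
      have Hd := plus_deriv HI (mul_deriv (lam / P) Hl). rewrite E2 in Hd. exact Hd.
    - have [HI HA] := Hbasic dmu Hdmu. have [l Hl] := Gd dmu Hdmu.
      have E1 := uniqueness_limite _ _ _ _ (H dmu Hdmu) (plus_deriv HI (mul_deriv (lam / P) Hl)).
      have E2 : P * Defs.Int dmu 0 T + lam * l = 0.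
      { have -> : P * Defs.Int dmu 0 T + lam * l = P * (Defs.Int dmu 0 T + lam / P * l) by field.
        rewrite -E1; ring. }
      have Hd := plus_deriv HA (mul_deriv lam Hl). rewrite E2 in Hd. exact Hd. }
  split; [|split].
  - move=> dmu Hdmu. have [HI HA] := Hbasic dmu Hdmu.
    split; [by exists (P * Defs.Int dmu 0 T) | split; [exact: Gd | by exists (Defs.Int dmu 0 T)]].
  - split.
    + move=> [HG [lam Hl]]; split => //; exists (lam / P); exact: (proj1 (key lam) Hl).
    + move=> [HG [lamr Hl]]; split => //; exists (lamr * P); apply (proj2 (key (lamr * P))).
      have -> : lamr * P / P = lamr by field. exact: Hl.
  - exact: key.
Qed.
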